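(* Let $1\le j\le k$. Let $\alpha=(\alpha_1,\dots,\alpha_j,0,\dots,0)\in\mathbb N^k$ (the last $k-j$ entries are zero) and $\beta=(\beta_1,\dots,\beta_k)\in\mathbb P^k$. Then for $t\ge0$ and $\mathrm{Re}(z)<0$, $$\phi\tbinom{\alpha}{\beta}(t)=\phi\tbinom{\alpha_1,\dots,\alpha_{j-1},\alpha_j}{\beta_1,\dots,\beta_{j-1},\beta_j+\beta_{j+1}+\cdots+\beta_k}(t)\;\cdot\;\phi\tbinom{0,\dots,0}{\beta_{j+1},\dots,\beta_k}(0).$$ Here the last factor has $k-j$ columns and is interpreted as $1$ when $j=k$.
   Context: $\mathbb P$ denotes the positive and $\mathbb N$ the nonnegative integers. Let $X=\{x_i:i\in\mathbb P\}$ be commuting indeterminates. For $\gamma\in\mathbb N^m$, $\mu\in\mathbb P^m$, real $t\ge0$ and complex $z$ with $\mathrm{Re}(z)<0$, define $$\phi\tbinom{\gamma}{\mu}(t)=\sum_{0<i_1<\cdots<i_m}x_{i_1}^{\gamma_1}\cdots x_{i_m}^{\gamma_m}e^{(i_1+t)\mu_1z}\cdots e^{(i_m+t)\mu_mz}.$$ The coefficient of each monomial in $X$ is an absolutely convergent series. The empty case $m=0$ gives $1$. *)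

(* Defs.v *)
From HB Require Import structures.
From mathcomp Require Import all_boot all_order all_algebra.
From mathcomp Require Import all_classical all_reals all_analysis.
From mathcomp Require Import complex.
Set Implicit Arguments. Unset Strict Implicit. Unset Printing Implicit Defensive.
Import Order.TTheory GRing.Theory Num.Theory.
Import numFieldNormedType.Exports.
Local Open Scope ring_scope.
Local Open Scope complex_scope.
Local Open Scope classical_set_scope.

Section Phi.
Variable R : realType.

Definition cexp (w : R[i]) : R[i] :=
  (expR (complex.Re w))%:C * ((cos (complex.Im w))%:C + 'i * (sin (complex.Im w))%:C).

Definition clim (u : nat -> R[i]) : R[i] :=
  (lim ((fun n => complex.Re (u n)) @ \oo)) +i* (lim ((fun n => complex.Im (u n)) @ \oo)).

Definition increasing (N m : nat) (s : m.-tuple 'I_N) : bool :=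
  sorted ltn [seq val k | k <- s] && all (fun k : 'I_N => (0 < val k)%N) s.

(* the monomial x_{i_1}^{g_1} ... x_{i_m}^{g_m}, as its exponent function:
   n |-> exponent of x_n *)
Definition mono (g : seq nat) (N : nat) (s : (size g).-tuple 'I_N) : nat -> nat :=
  fun n => (\sum_(l < size g) nth 0%N g l * (val (tnth s l) == n))%N.

Definition expterm (g mu : seq nat) (t : R) (z : R[i]) (N : nat)
    (s : (size g).-tuple 'I_N) : R[i] :=
  \prod_(l < size g) cexp (((val (tnth s l))%:R + t%:C) * (nth 0%N mu l)%:R * z).

Definition phi_partial (g mu : seq nat) (t : R) (z : R[i]) (M : nat -> nat)
    (N : nat) : R[i] :=
  \sum_(s : (size g).-tuple 'I_N.+1 | increasing s)
     (if `[< mono s = M >] then expterm mu t z s else 0).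

(* coefficient of the monomial M (given by its exponents: M n = exponent of
   x_n) in phi(g; mu)(t), i.e. the sum of the absolutely convergent series *)
Definition phi_coef (g mu : seq nat) (t : R) (z : R[i]) (M : nat -> nat) : R[i] :=
  clim (phi_partial g mu t z M).

End Phi.

(* Main.v *)
Require Import Defs.
From HB Require Import structures.
From mathcomp Require Import all_boot all_order all_algebra.
From mathcomp Require Import all_classical all_reals all_analysis.
From mathcomp Require Import complex.
From mathcomp Require Import ring lra zify.
Set Implicit Arguments. Unset Strict Implicit. Unset Printing Implicit Defensive.
Import Order.TTheory GRing.Theory Num.Theory.
Import numFieldNormedType.Exports.
Local Open Scope ring_scope.
Local Open Scope complex_scope.
Local Open Scope classical_set_scope.
Local Open Scope nat_scope.
Fixpoint W (m N : nat) : seq (seq nat) :=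
  if m is m'.+1 then [seq a :: y | a <- iota 1 N, y <- W m' N] else [:: [::]].

Definition Inc m N := [seq x <- W m N | path ltn 0 x].

Lemma memW m N x : (x \in W m N) = (size x == m) && all (fun a => 0 < a <= N) x.
Proof.
elim: m x => [|m IH] x /=.
  by rewrite inE; case: x.
apply/allpairsPdep/idP.
  move=> [a [y [Ha Hy ->]]] /=; rewrite mem_iota in Ha.
  rewrite IH in Hy; case/andP: Hy => /eqP -> ->.
  by rewrite eqxx /=; lia.
case: x => [|a y] //= /andP [Hs /andP [Ha Hy]].
exists a, y; split => //; first by rewrite mem_iota; lia.
by rewrite IH -eqSS Hs Hy.
Qed.

Lemma uniqW m N : uniq (W m N).
Proof.
elim: m => [|m IH] //=.
apply: allpairs_uniq => //; first exact: iota_uniq.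
by move=> [a y] [b y'] _ _ /= [-> ->].
Qed.

Lemma memInc m N x : (x \in Inc m N) =
  [&& size x == m, all (fun a => 0 < a <= N) x & path ltn 0 x].
Proof. by rewrite mem_filter memW andbC andbA. Qed.

Lemma uniqInc m N : uniq (Inc m N).
Proof. exact/filter_uniq/uniqW. Qed.

Lemma path_last a s : path ltn a s -> a <= last a s.
Proof.
elim: s a => [|b s IH] a //= /andP [ab Hs].
by apply: leq_trans (ltnW ab) (IH _ Hs).
Qed.

Lemma path_bounds a s : path ltn a s -> all (fun b => (a < b) && (b <= last a s)) s.
Proof.
elim: s a => [|b s IH] a //= /andP [ab Hs].
rewrite ab path_last //=.
apply/allP => c cs; have := allP (IH _ Hs) c cs => /andP [bc ->].
by rewrite (ltn_trans ab bc).
Qed.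

Lemma memInc' m N x : (x \in Inc m N) =
  [&& size x == m, path ltn 0 x & last 0 x <= N].
Proof.
rewrite memInc; case Hp: (path ltn 0 x); rewrite ?andbF ?andbT //.
congr (_ && _); have Hb := path_bounds Hp.
apply/allP/idP.
  case: x Hp Hb => [|b s] // Hp Hb H.
  have := H (last b s) (mem_last b s).
  by case/andP.
move=> HN c cx; have := allP Hb c cx => /andP [-> /=] cl.
exact: leq_trans cl HN.
Qed.
Definition join (u v : seq nat) := u ++ map (addn (last 0 u)) v.

Lemma path_shift c a v : path ltn (c + a) (map (addn c) v) = path ltn a v.
Proof. by elim: v a => [|b v IH] a //=; rewrite IH ltn_add2l. Qed.

Lemma last_shift c v : last c (map (addn c) v) = c + last 0 v.
Proof. by rewrite -{1}[c]addn0 last_map. Qed.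

Lemma last_sub c w : last 0 (map (subn^~ c) w) = last c w - c.
Proof. by case: w => [|b w] /=; [rewrite subnn | exact: (last_map (subn^~ c) w b)]. Qed.

Definition Pr j r N := [seq (u, v) | u <- Inc j N, v <- Inc r N].
Definition Prf j r N := [seq p <- Pr j r N | last 0 p.1 + last 0 p.2 <= N].

Lemma uniqPrf j r N : uniq (Prf j r N).
Proof.
apply/filter_uniq/allpairs_uniq; try exact: uniqInc.
by move=> [a b] [c d].
Qed.

Lemma perm_join j r N :
  perm_eq (Inc (j + r) N) [seq join p.1 p.2 | p <- Prf j r N].
Proof.
apply: uniq_perm; first exact: uniqInc.
  rewrite map_inj_in_uniq; first exact: uniqPrf.
  move=> [u v] [u' v']; rewrite !mem_filter /= => /andP [_ H1] /andP [_ H2].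
  case/allpairsP: H1 => [[u1 v1] /= [Hu1 _ [-> ->]]].
  case/allpairsP: H2 => [[u2 v2] /= [Hu2 _ [-> ->]]].
  move: Hu1 Hu2; rewrite !memInc' => /andP [/eqP su _] /andP [/eqP su' _].
  rewrite /join => /eqP; rewrite eqseq_cat ?su ?su' //.
  case/andP => /eqP Eu; rewrite Eu => H; congr pair.
  by move/eqP: H => /(inj_map (@addnI _)).
move=> x; apply/idP/idP; last first.
  move/mapP => [[u v]]; rewrite mem_filter /= => /andP [HN Hp] ->.
  case/allpairsP: Hp => [[u' v'] /= [Hu Hv [Eu Ev]]]; subst u v.
  move: Hu Hv; rewrite !memInc' /join => /and3P [/eqP su pu lu] /and3P [/eqP sv pv lv].
  rewrite size_cat size_map su sv eqxx /= cat_path pu /= -{1}[last 0 u']addn0 path_shift pv /=.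
  by rewrite last_cat last_shift.
rewrite memInc' => /and3P [/eqP sx px lx].
set u := take j x; set w := drop j x; set c := last 0 u.
have xE : x = u ++ w by rewrite cat_take_drop.
have pw : path ltn c w by move: px; rewrite xE cat_path => /andP [].
have pu : path ltn 0 u by move: px; rewrite xE cat_path => /andP [].
have wb := path_bounds pw.
set v := map (subn^~ c) w.
have wE : w = map (addn c) v.
  rewrite /v -map_comp -[LHS]map_id; apply/eq_in_map => b bw /=.
  by have := allP wb b bw => /andP [cb _]; lia.
apply/mapP; exists (u, v); last by rewrite /join -/c -wE.
rewrite mem_filter /=; apply/andP; split.
  have : c <= last c w by exact: path_last.
  rewrite /v last_sub.
  by move: lx; rewrite xE last_cat -/c; lia.
apply/allpairsP; exists (u, v); split => //; rewrite memInc'.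
  rewrite size_take sx; apply/and3P; split => //.
    by case: ltnP => H; apply/eqP; lia.
  move: lx; rewrite xE last_cat -/c => h.
  by apply: leq_trans h; apply: path_last.
apply/and3P; split.
- by rewrite size_map size_drop sx; apply/eqP; lia.
- by rewrite -(path_shift c) addn0 -wE.
- rewrite /v last_sub.
  by move: lx; rewrite xE last_cat -/c; lia.
Qed.

Lemma perm_Inc_le m N N' : N <= N' ->
  perm_eq (Inc m N) [seq x <- Inc m N' | last 0 x <= N].
Proof.
move=> NN; apply: uniq_perm; [exact: uniqInc | exact/filter_uniq/uniqInc |].
move=> x; rewrite memInc' mem_filter memInc'.
have [h|h] := leqP (last 0 x) N; rewrite /= ?andbT ?andbF //.
  by rewrite (leq_trans h NN) andbT.
Qed.
Local Open Scope ring_scope.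
Section B.
Variable R : realType.
Implicit Types (w : R[i]).

Lemma Re_cexp w : complex.Re (cexp w) = expR (complex.Re w) * cos (complex.Im w).
Proof. by case: w => a b; rewrite /cexp /=; ring. Qed.
Lemma Im_cexp w : complex.Im (cexp w) = expR (complex.Re w) * sin (complex.Im w).
Proof. by case: w => a b; rewrite /cexp /=; ring. Qed.

Definition n1 w : R := `|complex.Re w| + `|complex.Im w|.
Lemma n1_ge0 w : 0 <= n1 w.
Proof. by rewrite /n1 addr_ge0. Qed.
Lemma n10 : n1 0 = 0.
Proof. by rewrite /n1 /= normr0 addr0. Qed.
Lemma n11 : n1 1 = 1.
Proof. by rewrite /n1 /= normr0 normr1 addr0. Qed.
Lemma n1D w1 w2 : n1 (w1 + w2) <= n1 w1 + n1 w2.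
Proof.
case: w1 => a b; case: w2 => c d; rewrite /n1 /=.
apply: le_trans (lerD (ler_normD a c) (ler_normD b d)) _.
by rewrite le_eqVlt; apply/orP; left; apply/eqP; ring.
Qed.
Lemma n1M w1 w2 : n1 (w1 * w2) <= n1 w1 * n1 w2.
Proof.
case: w1 => a b; case: w2 => c d; rewrite /n1 /=.
apply: le_trans (lerD (ler_normB (a * c) (b * d)) (ler_normD (a * d) (b * c))) _.
by rewrite !normrM le_eqVlt; apply/orP; left; apply/eqP; ring.
Qed.
Lemma n1_sum (I : Type) (r : seq I) (P : pred I) (F : I -> R[i]) :
  n1 (\sum_(i <- r | P i) F i) <= \sum_(i <- r | P i) n1 (F i).
Proof.
apply: (big_ind2 (fun a b => n1 a <= b)); first by rewrite n10.
  by move=> x1 x2 y1 y2 h1 h2; apply: le_trans (n1D _ _) (lerD h1 h2).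
by [].
Qed.
Lemma n1_prod (I : Type) (r : seq I) (P : pred I) (F : I -> R[i]) :
  n1 (\prod_(i <- r | P i) F i) <= \prod_(i <- r | P i) n1 (F i).
Proof.
apply: (big_ind2 (fun a b => n1 a <= b)); first by rewrite n11.
  move=> x1 x2 y1 y2 h1 h2; apply: le_trans (n1M _ _) _.
  by apply: ler_pM => //; apply: n1_ge0.
by [].
Qed.
Lemma n1_cexp w : n1 (cexp w) <= 2 * expR (complex.Re w).
Proof.
rewrite /n1 Re_cexp Im_cexp !normrM gtr0_norm ?expR_gt0 //.
have hc : `|cos (complex.Im w)| <= 1 by rewrite ler_norml cos_le1 cos_geN1.
have hs : `|sin (complex.Im w)| <= 1 by rewrite ler_norml sin_le1 sin_geN1.
have e0 := expR_gt0 (complex.Re w).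
nra.
Qed.
Lemma cexpD w1 w2 : cexp (w1 + w2) = cexp w1 * cexp w2.
Proof.
case: w1 => a b; case: w2 => c d.
rewrite /cexp /= expRD cosD sinD.
apply/eqP; rewrite eq_complex /=; apply/andP; split; apply/eqP; ring.
Qed.
Lemma cexp0 : @cexp R 0 = 1.
Proof. by rewrite /cexp /= expR0 cos0 sin0; apply/eqP; rewrite eq_complex /=; apply/andP; split; apply/eqP; ring. Qed.
Lemma Re_lin (x m : nat) (t : R) (z : R[i]) :
  complex.Re (((x%:R : R[i]) + t%:C) * (m%:R) * z) = (x%:R + t) * m%:R * complex.Re z.
Proof.
have -> : ((x%:R : R[i]) + t%:C) * (m%:R) = ((x%:R + t) * m%:R)%:C.
  by rewrite rmorphM rmorphD /= !rmorph_nat.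
by case: z => a b /=; ring.
Qed.
End B.
Section C.
Variable R : realType.
Variable z : R[i].

Definition monol (g : seq nat) (x : seq nat) : nat -> nat :=
  fun n => (\sum_(l < size g) nth 0 g l * (nth 0 x l == n))%N.
Definition El (g mu : seq nat) (t : R) (x : seq nat) : R[i] :=
  \prod_(l < size g) cexp (((nth 0 x l)%:R + t%:C) * (nth 0 mu l)%:R * z).
Definition Tm g mu t M x := if `[< monol g x = M >] then El g mu t x else 0.

Lemma sorted_path0 (y : seq nat) : sorted ltn y -> all (fun a => 0 < a)%N y -> path ltn 0 y.
Proof. by case: y => [|a y] //= -> /andP [-> _]. Qed.

Lemma phi_partialE g mu t M N :
  phi_partial g mu t z M N = \sum_(x <- Inc (size g) N) Tm g mu t M x.
Proof.
pose L := [seq map val (val s) | s <- enum (fun s : (size g).-tuple 'I_N.+1 => increasing s)].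
have pL : perm_eq (Inc (size g) N) L.
  apply: uniq_perm; first exact: uniqInc.
    rewrite map_inj_uniq ?enum_uniq // => s1 s2 /(inj_map val_inj) H.
    exact: val_inj.
  move=> x; apply/idP/idP.
    rewrite memInc => /and3P [/eqP sx ax px].
    have Hs : size (map (@inord N) x) == size g by rewrite size_map sx.
    have Ex : map val (map (@inord N) x) = x.
      rewrite -map_comp -[RHS]map_id; apply/eq_in_map => a ax' /=.
      by have := allP ax a ax' => /andP [_ h]; rewrite inordK.
    apply/mapP; exists (Tuple Hs); last by rewrite /= Ex.
    rewrite mem_enum unfold_in /increasing /= Ex.
    rewrite all_map; apply/andP; split.
      by case: x px {sx ax Hs Ex} => //= a y /andP [].
    apply/allP => a ax'; rewrite /= inordK.
      by have := allP ax a ax' => /andP [].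
    by have := allP ax a ax' => /andP [_ h].
  case/mapP => s; rewrite mem_enum /increasing => /andP [ss sa] ->.
  rewrite memInc size_map size_tuple eqxx /=.
  rewrite sorted_path0 ?all_map ?andbT //.
  apply/allP => b bs /=; rewrite (allP sa b bs) /=.
  by rewrite -ltnS ltn_ord.
rewrite (perm_big _ pL) big_map big_enum /=.
apply: eq_big => // s.
have valE (l : 'I_(size g)) : val (tnth s l) = nth 0 (map val s) l.
  by rewrite (tnth_nth ord0) (nth_map ord0) // size_tuple.
have -> : mono s = monol g (map val s).
  by apply: funext => n; apply: eq_bigr => l _; rewrite valE.
rewrite /Tm; case: ifP => // _.
by move=> _; apply: eq_bigr => l _; rewrite valE.
Qed.
End C.
Section A.
Variable R : realType.
Lemma cvg_of_tail (u e : nat -> R) : e @ \oo --> 0 ->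
  (forall N M, (N <= M)%N -> `|u M - u N| <= e N) -> cvgn u.
Proof.
move=> e0 H; apply/cauchy_cvgP/cauchy_exP => eps eps0.
have := (cvgr0Pnorm_lt e).1 e0 eps eps0 => -[N _ HN].
exists (u N); exists N => // n /= Nn.
rewrite -ball_normE /= distrC.
apply: le_lt_trans (H _ _ Nn) _.
have := HN N (leqnn N).
by move=> h; apply: le_lt_trans h; exact: ler_norm.
Qed.
Lemma cvg0_of_bound (u e : nat -> R) : e @ \oo --> 0 ->
  (forall N, `|u N| <= e N) -> u @ \oo --> 0.
Proof.
move=> e0 H; apply/norm_cvg0P.
apply: (@squeeze_cvgr _ _ _ _ (cst 0) e); last 2 first.
- exact: cvg_cst.
- exact: e0.
by near=> n; rewrite normr_ge0 H.
Unshelve. all: by end_near. Qed.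
End A.

Section D.
Variable R : realType.
Variable z : R[i].
Hypothesis hz : complex.Re z < 0.

Definition sg : R := expR (complex.Re z / 2).
Lemma sg_gt0 : 0 < sg. Proof. exact: expR_gt0. Qed.
Lemma sg_lt1 : sg < 1. Proof. by rewrite /sg expR_lt1 pmulr_llt0 // invr_gt0. Qed.
Lemma sg_ge0 : 0 <= sg. Proof. exact: ltW sg_gt0. Qed.
Lemma sg_le1 : sg <= 1. Proof. exact: ltW sg_lt1. Qed.

Definition P (x : seq nat) : R := \prod_(a <- x) sg ^+ a.
Lemma P_ge0 x : 0 <= P x.
Proof. by apply: prodr_ge0 => a _; rewrite exprn_ge0 // sg_ge0. Qed.

Lemma P_last x : P x <= sg ^+ (last 0 x).
Proof.
have H a s : sg ^+ a * P s <= sg ^+ (last a s).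
  elim: s a => [|b s IH] a /=; first by rewrite /P big_nil mulr1.
  rewrite /P big_cons -/(P s); apply: le_trans (IH b).
  apply: ler_piMl; first by rewrite mulr_ge0 ?P_ge0 ?exprn_ge0 ?sg_ge0.
  by rewrite exprn_ile1 ?sg_ge0 ?sg_le1.
case: x => [|b s]; first by rewrite /P big_nil expr0.
by rewrite /P big_cons; exact: H.
Qed.

Lemma expR_bound (x m : nat) t : 0 <= t -> (0 < m)%N ->
  expR (complex.Re (((x%:R : R[i]) + t%:C) * m%:R * z)) <= sg ^+ x * sg ^+ x.
Proof.
move=> t0 m0; rewrite Re_lin -exprD /sg -expRM_natl ler_expR natrD.
have hm : 1 <= (m%:R : R) by rewrite ler1n.
have hx : 0 <= (x%:R : R) by [].
have -> : (x%:R + x%:R) * (complex.Re z / 2) = x%:R * complex.Re z :> R by field.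
apply: ler_wnM2r; first exact: ltW.
have h1 : 0 <= (x%:R + t) * (m%:R - 1) by apply: mulr_ge0; lra.
lra.
Qed.

Lemma n1_Tm g mu t M x : 0 <= t ->
  (forall l, (l < size g)%N -> (0 < nth 0 mu l)%N) -> size x = size g ->
  n1 (Tm z g mu t M x) <= 2 ^+ size g * (P x * P x).
Proof.
move=> t0 hmu sx.
have h1 : n1 (Tm z g mu t M x) <= n1 (El z g mu t x).
  by rewrite /Tm; case: ifP => _ //; rewrite n10 n1_ge0.
apply: le_trans h1 _; apply: le_trans (n1_prod _ _ _) _.
apply: (@le_trans _ _ (\prod_(l < size g) (2 * (sg ^+ nth 0 x l * sg ^+ nth 0 x l)))).
  apply: ler_prod => l _; rewrite n1_ge0 /=; apply: le_trans (n1_cexp _) _.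
  by rewrite ler_pM2l // expR_bound // hmu.
rewrite !big_split /= prodr_const card_ord.
have -> : \prod_(l < size g) sg ^+ nth 0 x l = P x.
  by rewrite /P (big_nth 0) sx big_mkord.
by [].
Qed.

Lemma sumW_P m N : \sum_(x <- W m N) P x = (\sum_(a <- iota 1 N) sg ^+ a) ^+ m.
Proof.
elim: m => [|m IH] /=; first by rewrite big_seq1 /P big_nil expr0.
rewrite big_allpairs_dep exprS -IH big_distrl /=; apply: eq_bigr => a _.
by rewrite big_distrr /=; apply: eq_bigr => y _; rewrite /P big_cons.
Qed.

Definition S : R := (1 - sg)^-1.

Lemma geo_bound N : \sum_(a <- iota 1 N) sg ^+ a <= S.
Proof.
have e1 : \sum_(a <- iota 0 N.+1) sg ^+ a = 1 + \sum_(a <- iota 1 N) sg ^+ a.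
  by rewrite /= big_cons expr0.
have e2 : \sum_(a <- iota 0 N.+1) sg ^+ a = \sum_(i < N.+1) sg ^+ i.
  by rewrite -(big_mkord xpredT) /index_iota subn0.
set s := \sum_(i < N.+1) sg ^+ i in e2.
have e3 : (1 - sg) * s = 1 - sg ^+ N.+1.
  have -> : (1 - sg) * s = - ((sg - 1) * s) by ring.
  by rewrite -subrX1 opprB.
have hs : s <= S.
  rewrite /S -[X in _ <= X]mulr1 ler_pdivlMl ?subr_gt0 ?sg_lt1 // e3.
  by rewrite lerBlDr lerDl exprn_ge0 // sg_ge0.
apply: le_trans _ hs; rewrite -e2 e1 lerDr //.
Qed.

Lemma S_ge0 : 0 <= S.
Proof. by rewrite /S invr_ge0 subr_ge0 sg_le1. Qed.

Lemma sum_filter_le (T : Type) (s : seq T) (Q : pred T) (F : T -> R) :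
  (forall x, 0 <= F x) -> \sum_(x <- s | Q x) F x <= \sum_(x <- s) F x.
Proof. by move=> h; rewrite [X in _ <= X](bigID Q) /= lerDl sumr_ge0. Qed.

Lemma sumInc_P m N (Q : pred (seq nat)) : \sum_(x <- Inc m N | Q x) P x <= S ^+ m.
Proof.
have h1 := sum_filter_le (Inc m N) Q P_ge0.
apply: le_trans h1 _.
rewrite /Inc big_filter; apply: le_trans (sum_filter_le _ _ P_ge0) _.
rewrite sumW_P; apply: lerXn2r; rewrite ?geo_bound // nnegrE ?S_ge0 //.
by rewrite sumr_ge0 // => a _; rewrite exprn_ge0 // sg_ge0.
Qed.

Lemma ReB (a b : R[i]) : complex.Re (a - b) = complex.Re a - complex.Re b.
Proof. by case: a; case: b. Qed.
Lemma ImB (a b : R[i]) : complex.Im (a - b) = complex.Im a - complex.Im b.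
Proof. by case: a; case: b. Qed.
Lemma Re_n1 (a : R[i]) : `|complex.Re a| <= n1 a.
Proof. by rewrite /n1 lerDl. Qed.
Lemma Im_n1 (a : R[i]) : `|complex.Im a| <= n1 a.
Proof. by rewrite /n1 lerDr. Qed.

Lemma tail_gen (s : seq (seq nat)) (Q : pred (seq nat)) (f : seq nat -> R[i]) :
  \sum_(x <- s) f x - \sum_(x <- [seq x <- s | Q x]) f x = \sum_(x <- s | ~~ Q x) f x.
Proof. by rewrite big_filter (bigID Q) /= addrAC subrr add0r. Qed.

Lemma tail_eq m N N' (f : seq nat -> R[i]) : (N <= N')%N ->
  \sum_(x <- Inc m N') f x - \sum_(x <- Inc m N) f x
  = \sum_(x <- Inc m N' | (N < last 0 x)%N) f x.
Proof.
move=> NN; rewrite (perm_big _ (perm_Inc_le m NN)) tail_gen.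
by apply: eq_bigl => x; rewrite ltnNge.
Qed.

Lemma sg_norm : `|sg| < 1.
Proof. by rewrite ger0_norm ?sg_ge0 // sg_lt1. Qed.

Lemma cvg_sumInc m (f : seq nat -> R[i]) C : 0 <= C ->
  (forall x, size x = m -> n1 (f x) <= C * (P x * P x)) ->
  cvgn (fun N => complex.Re (\sum_(x <- Inc m N) f x)) /\
  cvgn (fun N => complex.Im (\sum_(x <- Inc m N) f x)).
Proof.
move=> C0 hf.
pose e := geometric (C * S ^+ m) sg.
have e0 : e @ \oo --> 0 by exact: cvg_geometric sg_norm.
have tail N N' : (N <= N')%N ->
    n1 (\sum_(x <- Inc m N') f x - \sum_(x <- Inc m N) f x) <= e N.
  move=> NN; rewrite tail_eq //; apply: le_trans (n1_sum _ _ _) _.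
  apply: (@le_trans _ _ (\sum_(x <- Inc m N' | (N < last 0 x)%N) (C * sg ^+ N) * P x)).
    rewrite big_seq_cond [X in _ <= X]big_seq_cond; apply: ler_sum => x /andP [xI hN].
    move: xI; rewrite memInc' => /and3P [/eqP sx _ _].
    apply: le_trans (hf x sx) _; rewrite -mulrA ler_wpM2l //.
    apply: ler_wpM2r; first exact: P_ge0.
    apply: le_trans (P_last x) _; apply: ler_wiXn2l; rewrite ?sg_ge0 ?sg_le1 //.
    exact: ltnW.
  rewrite -mulr_sumr /e /geometric /= mulrAC ler_wpM2r ?exprn_ge0 ?sg_ge0 //.
  by rewrite ler_wpM2l // sumInc_P.
split; apply: (cvg_of_tail e0) => N N' NN.
  by rewrite -ReB; apply: le_trans (Re_n1 _) (tail _ _ NN).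
by rewrite -ImB; apply: le_trans (Im_n1 _) (tail _ _ NN).
Qed.
End D.
Section F.
Variable R : realType.
Variable z : R[i].

Lemma cexp_sum (I : Type) (s : seq I) (F : I -> R[i]) :
  cexp (\sum_(i <- s) F i) = \prod_(i <- s) cexp (F i).
Proof. exact: (big_morph (@cexp R) (@cexpD R) (@cexp0 R)). Qed.

Lemma PW (j' r : nat) alpha beta t M u v :
  size alpha = (j'.+1 + r)%N -> size beta = (j'.+1 + r)%N ->
  (forall l, (j'.+1 <= l < j'.+1 + r)%N -> nth 0%N alpha l = 0%N) ->
  size u = j'.+1 -> size v = r ->
  Tm z alpha beta t M (join u v) =
  Tm z (take j'.+1 alpha) (rcons (take j' beta) (\sum_(j' <= l < j'.+1 + r) nth 0 beta l)%N) t M u *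
  Tm z (nseq r 0%N) (drop j'.+1 beta) 0 (fun _ => 0%N) v.
Proof.
move=> sa sb a0 su sv.
set j := j'.+1.
have stake : size (take j alpha) = j by rewrite size_takel // sa leq_addr.
have hm1 : monol alpha (join u v) = monol (take j alpha) u.
  apply: funext => n; rewrite /monol sa stake big_split_ord /=.
  rewrite [X in (_ + X)%N]big1 ?addn0; last first.
    by move=> l _; rewrite a0 ?mul0n //= leq_addr /= ltn_add2l.
  apply: eq_bigr => l _ /=.
  by rewrite nth_take // /join nth_cat su ltn_ord.
have hm2 : monol (nseq r 0%N) v = (fun _ => 0%N).
  apply: funext => n; rewrite /monol big1 // => l _.
  by rewrite nth_nseq if_same mul0n.
rewrite /Tm hm1 hm2 (asboolT (erefl (fun _ : nat => 0%N))).
case: ifP => _; last by rewrite mul0r.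
rewrite /El sa stake size_nseq big_split_ord /=.
set Sb := (\sum_(j' <= l < j + r) nth 0 beta l)%N.
have hj1 i : (i < j)%N -> nth 0%N (join u v) i = nth 0%N u i.
  by move=> hi; rewrite /join nth_cat su hi.
have hj2 i : (i < r)%N -> nth 0%N (join u v) (j + i) = (last 0%N u + nth 0%N v i)%N.
  move=> hi; rewrite /join nth_cat su ltnNge leq_addr /= addKn.
  by rewrite (nth_map 0%N) // sv.
have sbt : size (take j' beta) = j' by rewrite size_takel // sb /j; lia.
have hr1 i : (i < j')%N -> nth 0%N (rcons (take j' beta) Sb) i = nth 0%N beta i.
  by move=> hi; rewrite nth_rcons sbt hi nth_take.
have hr2 : nth 0%N (rcons (take j' beta) Sb) j' = Sb.
  by rewrite nth_rcons sbt ltnn eqxx.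
have hlast : nth 0%N u j' = last 0%N u.
  by rewrite -nth_last su.
have hsum : Sb = (nth 0%N beta j' + \sum_(i < r) nth 0%N beta (j + i))%N.
  rewrite /Sb big_ltn ?ltnS ?leq_addr //; congr addn.
  rewrite -[j'.+1]add0n big_addn (_ : (j + r - (0 + j'.+1) = r)%N); last by rewrite add0n /j addKn.
  rewrite big_mkord.
  by apply: eq_bigr => i _; rewrite addnC.
rewrite [in LHS]big_ord_recr [in RHS]big_ord_recr /=.
rewrite -mulrA -[RHS]mulrA; congr (_ * _).
  apply: eq_bigr => i _ /=.
  by rewrite hj1 ?hr1 // ltnS ltnW.
rewrite hj1 // hlast hr2.
under eq_bigr => i _ do rewrite hj2 // natrD addrAC mulrDl mulrDl cexpD.
rewrite big_split /= mulrA; congr (_ * _); last first.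
  apply: eq_bigr => i _; rewrite nth_drop; congr cexp.
  by rewrite (_ : (0:R)%:C = 0) // addr0.
rewrite hsum natrD natr_sum mulrDr mulrDl cexpD; congr (_ * _).
rewrite mulr_sumr mulr_suml cexp_sum.
by apply: eq_bigr.
Qed.
End F.
Section G.
Variable R : realType.
Variable z : R[i].
Hypothesis hz : complex.Re z < 0.

Lemma tail_gen' (T : Type) (s : seq T) (Q : pred T) (f : T -> R[i]) :
  \sum_(x <- [seq x <- s | Q x]) f x = \sum_(x <- s) f x - \sum_(x <- s | ~~ Q x) f x.
Proof. by rewrite big_filter [X in _ = X - _](bigID Q) /= addrK. Qed.

Lemma D_bound j r N (a c : seq nat -> R[i]) Ca Cc : 0 <= Ca -> 0 <= Cc ->
  (forall u, size u = j -> n1 (a u) <= Ca * (P z u * P z u)) ->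
  (forall v, size v = r -> n1 (c v) <= Cc * (P z v * P z v)) ->
  n1 (\sum_(p <- Pr j r N | (N < last 0 p.1 + last 0 p.2)%N) a p.1 * c p.2)
  <= Ca * Cc * S z ^+ j * S z ^+ r * sg z ^+ N.
Proof.
move=> Ca0 Cc0 ha hc.
apply: le_trans (n1_sum _ _ _) _.
apply: (@le_trans _ _ (\sum_(p <- Pr j r N) (Ca * Cc * sg z ^+ N) * (P z p.1 * P z p.2))).
  apply: le_trans (_ : _ <= \sum_(p <- Pr j r N | (N < last 0 p.1 + last 0 p.2)%N)
                     (Ca * Cc * sg z ^+ N) * (P z p.1 * P z p.2)) _; last first.
    apply: sum_filter_le => p; rewrite !mulr_ge0 ?exprn_ge0 ?sg_ge0 ?P_ge0 //.
  rewrite big_seq_cond [X in _ <= X]big_seq_cond; apply: ler_sum => p /andP [pI hN].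
  move: hN; case/allpairsP: pI => [[u v] /= [uI vI ->]] /= hN.
  move: uI vI; rewrite !memInc' => /and3P [/eqP su _ _] /and3P [/eqP sv _ _].
  apply: le_trans (n1M _ _) _.
  apply: le_trans (ler_pM (n1_ge0 _) (n1_ge0 _) (ha u su) (hc v sv)) _.
  have hP : P z u * P z v <= sg z ^+ N.
    apply: le_trans (ler_pM (P_ge0 _ _) (P_ge0 _ _) (P_last hz u) (P_last hz v)) _.
    rewrite -exprD; apply: ler_wiXn2l; rewrite ?sg_ge0 ?sg_le1 //.
    exact: ltnW.
  have pu := P_ge0 z u; have pv := P_ge0 z v.
  have e : Ca * (P z u * P z u) * (Cc * (P z v * P z v)) = (Ca * Cc) * (P z u * P z v) * (P z u * P z v) by ring.
  rewrite e; set K := Ca * Cc; set X := P z u * P z v.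
  have X0 : 0 <= X by rewrite mulr_ge0.
  rewrite -mulrA -[X in _ <= X]mulrA ler_wpM2l ?mulr_ge0 //.
  exact: ler_wpM2r.
rewrite -mulr_sumr /Pr big_allpairs.
have -> : \sum_(i1 <- Inc j N) \sum_(i2 <- Inc r N) P z (i1, i2).1 * P z (i1, i2).2
  = (\sum_(u <- Inc j N) P z u) * (\sum_(v <- Inc r N) P z v).
  by rewrite big_distrl; apply: eq_bigr => u _; rewrite big_distrr.
have h1 := sumInc_P hz j N xpredT; have h2 := sumInc_P hz r N xpredT.
rewrite [X in _ <= X](_ : _ = (Ca * Cc * sg z ^+ N) * (S z ^+ j * S z ^+ r)); last by ring.
apply: ler_wpM2l; first by rewrite !mulr_ge0 ?exprn_ge0 ?sg_ge0.
apply: ler_pM; [apply: sumr_ge0 => x _; exact: P_ge0 | apply: sumr_ge0 => x _; exact: P_ge0 | exact: h1 | exact: h2].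
Qed.
End G.

Lemma cvgB' (R : realType) (u v : nat -> R) (a b : R) : u @ \oo --> a -> v @ \oo --> b ->
  (fun n => u n - v n) @ \oo --> a - b.
Proof. by move=> hu hv; exact: cvgB hu hv. Qed.
Lemma cvgD' (R : realType) (u v : nat -> R) (a b : R) : u @ \oo --> a -> v @ \oo --> b ->
  (fun n => u n + v n) @ \oo --> a + b.
Proof. by move=> hu hv; exact: cvgD hu hv. Qed.
Lemma cvgM' (R : realType) (u v : nat -> R) (a b : R) : u @ \oo --> a -> v @ \oo --> b ->
  (fun n => u n * v n) @ \oo --> a * b.
Proof. by move=> hu hv; exact: cvgM hu hv. Qed.

Lemma ReM (R : realType) (a b : R[i]) :
  complex.Re (a * b) = complex.Re a * complex.Re b - complex.Im a * complex.Im b.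
Proof. by case: a; case: b. Qed.
Lemma ImM (R : realType) (a b : R[i]) :
  complex.Im (a * b) = complex.Re a * complex.Im b + complex.Im a * complex.Re b.
Proof. by case: a; case: b. Qed.

Theorem lemma3p7 (R : realType) (k j : nat) (alpha beta : seq nat)
    (t : R) (z : R[i]) :
  (1 <= j <= k)%N ->
  size alpha = k -> size beta = k ->
  (forall l : nat, (j <= l < k)%N -> nth 0%N alpha l = 0%N) ->
  all (fun b => 0 < b)%N beta ->
  0 <= t -> complex.Re z < 0 ->
  forall M : nat -> nat,
    phi_coef alpha beta t z M =
    phi_coef (take j alpha)
             (rcons (take j.-1 beta) (\sum_(j.-1 <= l < k) nth 0%N beta l)%N) t z M
    * phi_coef (nseq (k - j) 0%N) (drop j beta) 0 z (fun _ => 0%N).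
Proof.
move=> /andP [j1 jk] sa sb a0 bpos t0 hz M.
have [r kE] : exists r, k = (j + r)%N by exists (k - j)%N; rewrite subnKC.
move: sa sb a0; rewrite kE addKn => sa sb a0; clear kE.
case: j j1 jk sa sb a0 => [//|j'] _ _ sa sb a0 /=.
set Sb := (\sum_(j' <= l < j'.+1 + r) nth 0%N beta l)%N.
set g1 := take j'.+1 alpha.
set mu1 := rcons (take j' beta) Sb.
set g2 := nseq r 0%N.
set mu2 := drop j'.+1 beta.
have sg1 : size g1 = j'.+1 by rewrite size_takel // sa leq_addr.
have sg2 : size g2 = r by rewrite size_nseq.
have bp l : (l < j'.+1 + r)%N -> (0 < nth 0%N beta l)%N.
  by move=> hl; apply: (all_nthP 0%N bpos); rewrite sb.
set a := Tm z g1 mu1 t M.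
set c := Tm z g2 mu2 0 (fun _ => 0%N).
have ha u : size u = j'.+1 -> n1 (a u) <= 2 ^+ j'.+1 * (P z u * P z u).
  move=> su; rewrite -sg1; apply: n1_Tm => //; last by rewrite sg1.
  move=> l; rewrite sg1 => hl; rewrite /mu1 nth_rcons size_takel ?sb; last first.
    by lia.
  have [hl2|hl2] := ltnP l j'; first by rewrite nth_take // bp //; lia.
  have -> : l = j' by apply/eqP; rewrite eqn_leq hl2 -ltnS hl.
  rewrite eqxx /Sb big_ltn ?ltnS ?leq_addr //.
  by rewrite addn_gt0 bp // ltn_addr.
have hc v : size v = r -> n1 (c v) <= 2 ^+ r * (P z v * P z v).
  move=> sv; rewrite -sg2; apply: n1_Tm => //; last by rewrite sg2.
  by move=> l; rewrite sg2 => hl; rewrite /mu2 nth_drop bp // ltn_add2l.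
have [cRB cIB] := cvg_sumInc hz (exprn_ge0 j'.+1 (ler0n R 2)) ha.
have [cRC cIC] := cvg_sumInc hz (exprn_ge0 r (ler0n R 2)) hc.
set B := fun N => \sum_(u <- Inc j'.+1 N) a u.
set C := fun N => \sum_(v <- Inc r N) c v.
set D := fun N => \sum_(p <- Pr j'.+1 r N | (N < last 0 p.1 + last 0 p.2)%N) a p.1 * c p.2.
have hB : phi_partial g1 mu1 t z M = B.
  by apply: funext => N; rewrite phi_partialE sg1.
have hC : phi_partial g2 mu2 0 z (fun _ => 0%N) = C.
  by apply: funext => N; rewrite phi_partialE sg2.
have hA : phi_partial alpha beta t z M = (fun N => B N * C N - D N).
  apply: funext => N; rewrite phi_partialE sa (perm_big _ (perm_join j'.+1 r N)) big_map.
  transitivity (\sum_(p <- Prf j'.+1 r N) a p.1 * c p.2).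
    rewrite big_seq [RHS]big_seq; apply: eq_bigr => p.
    rewrite mem_filter => /andP [_ /allpairsP [[u v] /= [uI vI ->]]] /=.
    move: uI vI; rewrite !memInc' => /and3P [/eqP su _ _] /and3P [/eqP sv _ _].
    exact: PW.
  rewrite /Prf tail_gen'; congr (_ - _).
    rewrite /B /C /Pr big_allpairs big_distrl; apply: eq_bigr => u _.
    by rewrite big_distrr.
  by apply: eq_bigl => p /=; rewrite ltnNge.
pose e := geometric (2 ^+ j'.+1 * 2 ^+ r * S z ^+ j'.+1 * S z ^+ r) (sg z).
have e0 : e @ \oo --> 0 by exact: cvg_geometric (sg_norm hz).
have hD N : n1 (D N) <= e N.
  rewrite /e /geometric /=.
  apply: D_bound => //; exact: exprn_ge0.
have hRD : (fun N => complex.Re (D N)) @ \oo --> 0.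
  by apply: (cvg0_of_bound e0) => N; apply: le_trans (Re_n1 _) (hD N).
have hID : (fun N => complex.Im (D N)) @ \oo --> 0.
  by apply: (cvg0_of_bound e0) => N; apply: le_trans (Im_n1 _) (hD N).
rewrite /phi_coef /clim hA hB hC.
have lRA : lim ((fun N => complex.Re (B N * C N - D N)) @ \oo) =
   lim ((fun N => complex.Re (B N)) @ \oo) * lim ((fun N => complex.Re (C N)) @ \oo)
   - lim ((fun N => complex.Im (B N)) @ \oo) * lim ((fun N => complex.Im (C N)) @ \oo).
  apply: cvg_lim => //.
  have -> : (fun N => complex.Re (B N * C N - D N)) =
     (fun N => (complex.Re (B N) * complex.Re (C N) - complex.Im (B N) * complex.Im (C N)) - complex.Re (D N)).
    by apply: funext => N; rewrite ReB ReM.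
  rewrite -[X in _ --> X]subr0.
  apply: cvgB' hRD; apply: cvgB'; exact: cvgM'.
have lIA : lim ((fun N => complex.Im (B N * C N - D N)) @ \oo) =
   lim ((fun N => complex.Re (B N)) @ \oo) * lim ((fun N => complex.Im (C N)) @ \oo)
   + lim ((fun N => complex.Im (B N)) @ \oo) * lim ((fun N => complex.Re (C N)) @ \oo).
  apply: cvg_lim => //.
  have -> : (fun N => complex.Im (B N * C N - D N)) =
     (fun N => (complex.Re (B N) * complex.Im (C N) + complex.Im (B N) * complex.Re (C N)) - complex.Im (D N)).
    by apply: funext => N; rewrite ImB ImM.
  rewrite -[X in _ --> X]subr0.
  apply: cvgB' hID; apply: cvgD'; exact: cvgM'.
by rewrite lRA lIA.
Qed.
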